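(* Let $(K,\mathbb D)$ be an $F[m]$-field for the group law $F$ of the context. Let $0\le n\le m-1$ and $i,j<p^{n+1}$ with $(i,j)\neq(0,0)$. Then $F_n\subseteq\ker D_{(i,j)}$.
   Context: $k$ is a perfect field of characteristic $p>0$, $m\in\mathbb N_{>0}$. For $1\le i\le p-1$ let $\lambda_i\in\mathbb F_p$ be the image of $\frac1p\binom pi$, and $H_n(X_2,Y_2):=\sum_{i=1}^{p-1}\lambda_iX_2^{ip^n}Y_2^{(p-i)p^n}$. Fix $M\in\mathbb N$, $\alpha_0,\dots,\alpha_M\in k$, and let $F(X_1,X_2,Y_1,Y_2):=\big(X_1+Y_1+\sum_{n=0}^M\alpha_nH_n(X_2,Y_2),\ X_2+Y_2\big)$. Let $v_1,v_2,w_1,w_2$ be $m$-truncated variables ($k[\bar v,\bar w]=k[X_1,X_2,Y_1,Y_2]/(X_i^{p^m},Y_i^{p^m})$), $F[m]$ the image of $F$. An $F[m]$-field is a field $K\supseteq k$ with a family $(D_{(i,j)}:K\to K)_{0\le i,j<p^m}$, $D_{(0,0)}=\mathrm{id}$, such that $r\mapsto\sum D_{(i,j)}(r)v_1^iv_2^j$ is a $k$-algebra homomorphism $K\to K[v_1,v_2]$ and $\sum D_{(j_1,j_2)}(D_{(i_1,i_2)}(r))v_1^{i_1}v_2^{i_2}w_1^{j_1}w_2^{j_2}=\sum D_{(i_1,i_2)}(r)F[m]_1^{i_1}F[m]_2^{i_2}$ for all $r$. For $0\le s\le m-1$, $F_s:=\bigcap_{j=0}^s\big(\ker D_{(p^j,0)}\cap\ker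 D_{(0,p^j)}\big)$. *)

(* Defs.v *)
From HB Require Import structures.
From mathcomp Require Import all_boot all_order all_algebra.
Set Implicit Arguments. Unset Strict Implicit. Unset Printing Implicit Defensive.
Import GRing.Theory.
Local Open Scope ring_scope.

Definition perfect_pchar (k : fieldType) (p : nat) : Prop :=
  p \in [pchar k] /\ forall x : k, exists y : k, y ^+ p = x.

(* Polynomials in 4 variables v1, v2, w1, w2 over K, as nested univariate
   polynomials.  v1 is the innermost variable, w2 the outermost. *)
Definition P4 (K : fieldType) := {poly {poly {poly {poly K}}}}.

Definition cst4 (K : fieldType) (c : K) : P4 K := c%:P%:P%:P%:P.
Definition v1 (K : fieldType) : P4 K := 'X%:P%:P%:P.
Definition v2 (K : fieldType) : P4 K := 'X%:P%:P.
Definition w1 (K : fieldType) : P4 K := 'X%:P.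
Definition w2 (K : fieldType) : P4 K := 'X.

(* coefficient of v1^a v2^b w1^c w2^d *)
Definition coef4 (K : fieldType) (P : P4 K) (a b c d : nat) : K :=
  P`_d`_c`_b`_a.

(* Equality in K[v1,v2,w1,w2]/(v1^N, v2^N, w1^N, w2^N): since the ideal is
   monomial, two polynomials are congruent iff their coefficients on all
   monomials with all exponents < N agree. *)
Definition trunc_eq (K : fieldType) (N : nat) (P Q : P4 K) : Prop :=
  forall a b c d, (a < N)%N -> (b < N)%N -> (c < N)%N -> (d < N)%N ->
    coef4 P a b c d = coef4 Q a b c d.

(* lambda_i = image in F_p (hence in K) of (1/p) binom(p,i) *)
Definition lambda (K : fieldType) (p i : nat) : K := ('C(p, i) %/ p)%:R.

(* H_n(X2, Y2) evaluated at X2 := v2, Y2 := w2 *)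
Definition Hn (K : fieldType) (p n : nat) : P4 K :=
  \sum_(1 <= i < p) cst4 (lambda K p i) * v2 K ^+ (i * p ^ n) * w2 K ^+ ((p - i) * p ^ n).

(* The group law F, with X := v, Y := w, coefficients alpha mapped into K. *)
Definition F1 (k K : fieldType) (iota : {rmorphism k -> K}) (p M : nat)
  (alpha : nat -> k) : P4 K :=
  v1 K + w1 K + \sum_(0 <= n < M.+1) cst4 (iota (alpha n)) * Hn K p n.
Definition F2 (K : fieldType) : P4 K := v2 K + w2 K.

Definition Dser (K : fieldType) (N : nat) (D : nat -> nat -> K -> K) (r : K) : P4 K :=
  \sum_(i < N) \sum_(j < N) cst4 (D i j r) * v1 K ^+ i * v2 K ^+ j.

Definition is_Fm_field (k K : fieldType) (iota : {rmorphism k -> K})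
  (p m M : nat) (alpha : nat -> k) (D : nat -> nat -> K -> K) : Prop :=
  let N := (p ^ m)%N in
  (forall r, D 0%N 0%N r = r) /\
  (* r |-> Dser r is a k-algebra homomorphism K -> K[v1,v2]/(v1^N,v2^N) *)
  (forall r s, trunc_eq N (Dser N D (r + s)) (Dser N D r + Dser N D s)) /\
  (forall r s, trunc_eq N (Dser N D (r * s)) (Dser N D r * Dser N D s)) /\
  trunc_eq N (Dser N D 1) 1 /\
  (forall (c : k) r, trunc_eq N (Dser N D (iota c * r)) (cst4 (iota c) * Dser N D r)) /\
  (forall r,
     trunc_eq N
       (\sum_(i1 < N) \sum_(i2 < N) \sum_(j1 < N) \sum_(j2 < N)
          cst4 (D j1 j2 (D i1 i2 r)) * v1 K ^+ i1 * v2 K ^+ i2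
            * w1 K ^+ j1 * w2 K ^+ j2)
       (\sum_(i1 < N) \sum_(i2 < N)
          cst4 (D i1 i2 r) * F1 iota p M alpha ^+ i1 * F2 K ^+ i2)).

Definition Fs (K : fieldType) (p s : nat) (D : nat -> nat -> K -> K) (x : K) : Prop :=
  forall j, (j <= s)%N -> D (p ^ j)%N 0%N x = 0 /\ D 0%N (p ^ j)%N x = 0.

(* Main.v *)
Require Import Defs.
From HB Require Import structures.
From mathcomp Require Import all_boot all_order all_algebra.
From mathcomp Require Import zify.
Import GRing.Theory.
Local Open Scope ring_scope.
Set Implicit Arguments. Unset Strict Implicit.

Lemma sum_pick N t (V : nmodType) (F : 'I_N -> V) (ht : (t < N)%N) :
  (forall i : 'I_N, (i : nat) != t -> F i = 0) -> \sum_(i < N) F i = F (Ordinal ht).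
Proof.
move=> H; rewrite (bigD1 (Ordinal ht)) //= big1 ?addr0 //.
Qed.
Arguments sum_pick {N t V F}.

Lemma binq_nz (K : fieldType) (p i : nat) : p \in [pchar K] -> (0 < i)%N ->
  ('C(i, p ^ logn p i))%:R != 0 :> K.
Proof.
move=> hp hi.
have pr := pcharf_prime hp.
have [m' cop ei] := pfactor_coprime pr hi.
set q := (p ^ logn p i)%N in ei *.
have q0 : (0 < q)%N by rewrite expn_gt0 prime_gt0.
have m0 : (0 < m')%N by move: hi; rewrite ei muln_gt0 => /andP[].
have hP : p \in [pchar {poly K}] by rewrite pchar_poly.
have Fr : ('X + 1 : {poly K}) ^+ q = 'X ^+ q + 1.
  rewrite exprDn_pchar ?expr1n //.
  rewrite /q pnatX (pnatE _ pr); by rewrite hP.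
have E : ('X + 1 : {poly K}) ^+ i = ('X ^+ q + 1) ^+ m'.
  by rewrite ei mulnC exprM Fr.
have := congr1 (fun P : {poly K} => P`_q) E.
rewrite /= !exprD1n !coef_sum.
have hq : (q < i.+1)%N by rewrite ltnS ei leq_pmull.
rewrite (sum_pick hq) /=; last first.
  by move=> k hk; rewrite coefMn coefXn eq_sym (negbTE hk) mul0rn.
have h1 : (1 < m'.+1)%N by [].
rewrite (sum_pick h1) /=; last first.
  move=> k hk; rewrite coefMn -exprM coefXn.
  rewrite -{1}(muln1 q) eqn_pmul2l // eq_sym (negbTE hk).
  by rewrite mul0rn.
rewrite coefMn coefXn eqxx coefMn -exprM muln1 coefXn eqxx bin1 => ->.
by rewrite -(dvdn_pcharf hp) -prime_coprime.
Qed.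

Section S.
Variable K : fieldType.
Implicit Types P Q : P4 K.

Lemma polyCXn (R : nzRingType) (c : R) n : (c ^+ n)%:P = c%:P ^+ n.
Proof. by rewrite rmorphXn. Qed.

Lemma coef4D P Q a b c e : coef4 (P + Q) a b c e = coef4 P a b c e + coef4 Q a b c e.
Proof. by rewrite /coef4 !coefD. Qed.
Lemma coef4N P a b c e : coef4 (- P) a b c e = - coef4 P a b c e.
Proof. by rewrite /coef4 !coefN. Qed.
Lemma coef4B P Q a b c e : coef4 (P - Q) a b c e = coef4 P a b c e - coef4 Q a b c e.
Proof. by rewrite coef4D coef4N. Qed.
Lemma coef40 a b c e : coef4 (0 : P4 K) a b c e = 0.
Proof. by rewrite /coef4 !coef0. Qed.
Lemma coef4_sum (I : Type) (r : seq I) (Pr : pred I) (F : I -> P4 K) a b c e :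
  coef4 (\sum_(i <- r | Pr i) F i) a b c e = \sum_(i <- r | Pr i) coef4 (F i) a b c e.
Proof. by rewrite /coef4 !coef_sum. Qed.
Lemma coef4_cstM c P a b d e : coef4 (cst4 c * P) a b d e = c * coef4 P a b d e.
Proof. by rewrite /coef4 /cst4 !coefCM. Qed.
Lemma coef4_natmul P k a b c e : coef4 (P *+ k) a b c e = coef4 P a b c e *+ k.
Proof. by rewrite /coef4 !coefMn. Qed.

Lemma coef4_mono a b d e a' b' d' e' :
  coef4 (v1 K ^+ a * v2 K ^+ b * w1 K ^+ d * w2 K ^+ e) a' b' d' e' =
  if [&& a == a', b == b', d == d' & e == e'] then 1 else 0.
Proof.
rewrite /coef4 /v1 /v2 /w1 /w2 -!polyCXn -!polyCM.
rewrite coefCM coefXn [e' == e]eq_sym.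
case: (e == e'); last by rewrite mulr0 !coef0 !andbF.
rewrite mulr1 coefCM coefXn [d' == d]eq_sym.
case: (d == d'); last by rewrite mulr0 !coef0 !andbF.
rewrite mulr1 coefCM coefXn [b' == b]eq_sym.
case: (b == b'); last by rewrite mulr0 !coef0 !andbF.
rewrite mulr1 coefXn [a' == a]eq_sym.
by case: (a == a').
Qed.

Lemma coef4M P Q a b c e : coef4 (P * Q) a b c e =
  \sum_(e1 < e.+1) \sum_(c1 < c.+1) \sum_(b1 < b.+1) \sum_(a1 < a.+1)
    coef4 P a1 b1 c1 e1 * coef4 Q (a - a1) (b - b1) (c - c1) (e - e1).
Proof.
rewrite /coef4 coefM !coef_sum; apply: eq_bigr => e1 _.
rewrite coefM !coef_sum; apply: eq_bigr => c1 _.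
rewrite coefM !coef_sum; apply: eq_bigr => b1 _.
by rewrite coefM.
Qed.


Section LWS.
Variables (wa wb wd we : nat).
Definition LW (P : P4 K) (d : nat) := forall a b c e,
  (wa * a + wb * b + wd * c + we * e < d)%N -> coef4 P a b c e = 0.

Lemma LW0 P : LW P 0.
Proof. by move=> a b c e. Qed.
Lemma LW_le P d d' : (d' <= d)%N -> LW P d -> LW P d'.
Proof. move=> h H a b c e h2; apply: H; exact: leq_trans h2 h. Qed.
Lemma LWz d : LW 0 d.
Proof. by move=> *; rewrite coef40. Qed.
Lemma LW_add P Q d : LW P d -> LW Q d -> LW (P + Q) d.
Proof. by move=> H1 H2 a b c e h; rewrite coef4D H1 // H2 // addr0. Qed.
Lemma LW_opp P d : LW P d -> LW (- P) d.
Proof. by move=> H a b c e h; rewrite coef4N H // oppr0. Qed.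
Lemma LW_sub P Q d : LW P d -> LW Q d -> LW (P - Q) d.
Proof. by move=> H1 H2; apply: LW_add => //; apply: LW_opp. Qed.
Lemma LW_sum (I : Type) (r : seq I) (Pr : pred I) (F : I -> P4 K) d :
  (forall i, Pr i -> LW (F i) d) -> LW (\sum_(i <- r | Pr i) F i) d.
Proof. move=> H; apply: (big_ind (fun P => LW P d)); [exact: LWz | move=> x y; exact: LW_add | exact: H]. Qed.
Lemma LW_cstM c P d : LW P d -> LW (cst4 c * P) d.
Proof. by move=> H a b c' e h; rewrite coef4_cstM H // mulr0. Qed.
Lemma LW_mul P Q d1 d2 : LW P d1 -> LW Q d2 -> LW (P * Q) (d1 + d2).
Proof.
move=> H1 H2 a b c e h; rewrite coef4M.
apply: big1 => [[e1 he1]] _; apply: big1 => [[c1 hc1]] _.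
apply: big1 => [[b1 hb1]] _; apply: big1 => [[a1 ha1]] _ /=.
case: (ltnP (wa * a1 + wb * b1 + wd * c1 + we * e1) d1) => h1.
  by rewrite H1 // mul0r.
rewrite H2 ?mulr0 //.
have t1 : (wa * a1 <= wa * a)%N by rewrite leq_mul2l -ltnS ha1 orbT.
have t2 : (wb * b1 <= wb * b)%N by rewrite leq_mul2l -ltnS hb1 orbT.
have t3 : (wd * c1 <= wd * c)%N by rewrite leq_mul2l -ltnS hc1 orbT.
have t4 : (we * e1 <= we * e)%N by rewrite leq_mul2l -ltnS he1 orbT.
rewrite !mulnBr; lia.
Qed.
Lemma LW_exp P d k : LW P d -> LW (P ^+ k) (k * d).
Proof.
move=> H; elim: k => [|k IH]; first by rewrite mul0n; apply: LW0.
by rewrite exprS mulSn; apply: LW_mul.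
Qed.
Lemma LW_mono a b d e : LW (v1 K ^+ a * v2 K ^+ b * w1 K ^+ d * w2 K ^+ e)
   (wa * a + wb * b + wd * d + we * e).
Proof.
move=> a' b' d' e' h; rewrite coef4_mono.
case: ifP => // /and4P [/eqP h1 /eqP h2 /eqP h3 /eqP h4].
by subst; rewrite ltnn in h.
Qed.
Lemma LW_v1 : LW (v1 K) wa.
Proof. have := LW_mono (a:=1) (b:=0) (d:=0) (e:=0); rewrite !expr0 !mulr1 expr1 !muln0 muln1 !addn0; exact. Qed.
Lemma LW_v2 : LW (v2 K) wb.
Proof. have := LW_mono (a:=0) (b:=1) (d:=0) (e:=0); rewrite !expr0 !mulr1 mul1r expr1 !muln0 muln1 !addn0; exact. Qed.
Lemma LW_w1 : LW (w1 K) wd.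
Proof. have := LW_mono (a:=0) (b:=0) (d:=1) (e:=0); rewrite !expr0 !mulr1 !mul1r expr1 !muln0 muln1 add0n addn0; exact. Qed.
Lemma LW_w2 : LW (w2 K) we.
Proof. have := LW_mono (a:=0) (b:=0) (d:=0) (e:=1); rewrite !expr0 !mul1r expr1 !muln0 muln1 !add0n; exact. Qed.

Lemma LW_congr_mul P P' Q Q' d : LW (P - P') d -> LW (Q - Q') d -> LW (P * Q - P' * Q') d.
Proof.
move=> H1 H2.
have -> : P * Q - P' * Q' = (P - P') * Q + P' * (Q - Q').
  by rewrite mulrBl mulrBr addrA subrK.
apply: LW_add.
  by rewrite -[d]addn0; apply: LW_mul => //; apply: LW0.
by rewrite -[d]add0n; apply: LW_mul => //; apply: LW0.
Qed.
Lemma LW_congr_exp P P' d k : LW (P - P') d -> LW (P ^+ k - P' ^+ k) d.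
Proof.
move=> H; elim: k => [|k IH]; first by rewrite !expr0 subrr; apply: LWz.
by rewrite !exprS; apply: LW_congr_mul.
Qed.
Lemma LW_coef_eq P P' d a b c e : LW (P - P') d ->
  (wa * a + wb * b + wd * c + we * e < d)%N -> coef4 P a b c e = coef4 P' a b c e.
Proof. by move=> H h; apply/eqP; rewrite -subr_eq0 -coef4B H. Qed.
End LWS.



Lemma coef4_term g x y z t a b c e :
  coef4 (cst4 g * v1 K ^+ x * v2 K ^+ y * w1 K ^+ z * w2 K ^+ t) a b c e =
  if [&& x == a, y == b, z == c & t == e] then g else 0.
Proof. by rewrite -!mulrA coef4_cstM !mulrA coef4_mono; case: ifP; rewrite ?mulr1 ?mulr0. Qed.

Lemma coef4_term2 g x y a b c e :
  coef4 (cst4 g * v1 K ^+ x * v2 K ^+ y) a b c e =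
  if [&& x == a, y == b, 0%N == c & 0%N == e] then g else 0.
Proof. by rewrite -coef4_term !expr0 !mulr1. Qed.

Lemma coef4_sum4 N (G : nat -> nat -> nat -> nat -> K) a b c e :
  (a < N)%N -> (b < N)%N -> (c < N)%N -> (e < N)%N ->
  coef4 (\sum_(i1 < N) \sum_(i2 < N) \sum_(j1 < N) \sum_(j2 < N)
     cst4 (G i1 i2 j1 j2) * v1 K ^+ i1 * v2 K ^+ i2 * w1 K ^+ j1 * w2 K ^+ j2) a b c e
  = G a b c e.
Proof.
move=> ha hb hc he; rewrite coef4_sum.
rewrite (sum_pick ha) /=; last first.
  move=> i hi; rewrite coef4_sum; apply: big1 => j _; rewrite coef4_sum.
  apply: big1 => k _; rewrite coef4_sum; apply: big1 => l _.
  by rewrite coef4_term (negbTE hi).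
rewrite coef4_sum (sum_pick hb) /=; last first.
  move=> i hi; rewrite coef4_sum; apply: big1 => k _; rewrite coef4_sum; apply: big1 => l _.
  by rewrite coef4_term (negbTE hi) andbF.
rewrite coef4_sum (sum_pick hc) /=; last first.
  move=> i hi; rewrite coef4_sum; apply: big1 => l _.
  by rewrite coef4_term (negbTE hi) !andbF.
rewrite coef4_sum (sum_pick he) /=; last first.
  by move=> i hi; rewrite coef4_term (negbTE hi) !andbF.
by rewrite coef4_term !eqxx.
Qed.

Lemma coef4_Dser N (D : nat -> nat -> K -> K) r a b :
  (a < N)%N -> (b < N)%N -> coef4 (Dser N D r) a b 0 0 = D a b r.
Proof.
move=> ha hb; rewrite /Dser coef4_sum.
rewrite (sum_pick ha) /=; last first.
  move=> i hi; rewrite coef4_sum; apply: big1 => j _.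
  by rewrite coef4_term2 (negbTE hi).
rewrite coef4_sum (sum_pick hb) /=; last first.
  by move=> i hi; rewrite coef4_term2 (negbTE hi) andbF.
by rewrite coef4_term2 !eqxx.
Qed.

Lemma coef4_one a b c e : coef4 (1 : P4 K) a b c e =
  if [&& 0%N == a, 0%N == b, 0%N == c & 0%N == e] then 1 else 0.
Proof. by rewrite -coef4_mono !expr0 !mulr1. Qed.

Lemma binom1 n a c : coef4 ((v1 K + w1 K) ^+ n) a 0 c 0 =
  if (a + c == n)%N then ('C(n, c))%:R else 0.
Proof.
rewrite exprDn coef4_sum.
have E i : v1 K ^+ (n - i) * w1 K ^+ i = v1 K ^+ (n - i) * v2 K ^+ 0 * w1 K ^+ i * w2 K ^+ 0.
  by rewrite !expr0 !mulr1.
under eq_bigr => i _ do rewrite coef4_natmul E coef4_mono.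
case: (leqP c n) => hcn.
  have hc : (c < n.+1)%N by [].
  rewrite (sum_pick hc) /=; last first.
    by move=> i hi; rewrite [i == c :> nat](negbTE hi) !andbF mul0rn.
  rewrite !eqxx !andbT.
  have -> : (n - c == a)%N = (a + c == n)%N by apply/eqP/eqP; lia.
  by case: (_ == _); rewrite ?mul0rn.
rewrite big1; last first.
  move=> [i hi] _ /=.
  have -> : (i == c)%N = false by apply/eqP; lia.
  by rewrite !andbF mul0rn.
by have -> : (a + c == n)%N = false by apply/eqP; lia.
Qed.

Lemma binom2 n b c : coef4 ((v2 K + w2 K) ^+ n) 0 b 0 c =
  if (b + c == n)%N then ('C(n, c))%:R else 0.
Proof.
rewrite exprDn coef4_sum.
have E i : v2 K ^+ (n - i) * w2 K ^+ i = v1 K ^+ 0 * v2 K ^+ (n - i) * w1 K ^+ 0 * w2 K ^+ i.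
  by rewrite !expr0 !mulr1 mul1r.
under eq_bigr => i _ do rewrite coef4_natmul E coef4_mono.
case: (leqP c n) => hcn.
  have hc : (c < n.+1)%N by [].
  rewrite (sum_pick hc) /=; last first.
    by move=> i hi; rewrite [i == c :> nat](negbTE hi) !andbF mul0rn.
  rewrite !eqxx !andbT.
  have -> : (n - c == b)%N = (b + c == n)%N by apply/eqP/eqP; lia.
  by case: (_ == _); rewrite ?mul0rn.
rewrite big1; last first.
  move=> [i hi] _ /=.
  have -> : (i == c)%N = false by apply/eqP; lia.
  by rewrite !andbF mul0rn.
by have -> : (b + c == n)%N = false by apply/eqP; lia.
Qed.

Lemma LW_sum_mem wa wb wd we (r : seq nat) (F : nat -> P4 K) d :
  (forall i, i \in r -> LW wa wb wd we (F i) d) -> LW wa wb wd we (\sum_(i <- r) F i) d.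
Proof. by move=> H; rewrite big_seq; apply: LW_sum. Qed.

Lemma LW_Hn wa wb wd we p n :
  LW wa wb wd we (Hn K p n) (wb + we).
Proof.
rewrite /Hn; apply: LW_sum_mem => i; rewrite mem_index_iota => /andP[hi1 hip].
rewrite -mulrA; apply: LW_cstM.
eapply LW_le; last first.
  apply: LW_mul; apply: LW_exp; [apply: LW_v2 | apply: LW_w2].
have hp : (0 < p ^ n)%N by rewrite expn_gt0 (leq_trans hi1 (ltnW hip)).
have h1 : (0 < i * p ^ n)%N by rewrite muln_gt0 hi1 hp.
have h2 : (0 < (p - i) * p ^ n)%N by rewrite muln_gt0 subn_gt0 hip hp.
by apply: leq_add; apply: leq_pmull.
Qed.

Lemma LW_G wa wb wd we p M (c : nat -> K) :
  LW wa wb wd we (\sum_(0 <= n < M.+1) cst4 (c n) * Hn K p n) (wb + we).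
Proof. by apply: LW_sum => n _; apply: LW_cstM; apply: LW_Hn. Qed.

End S.

Section Main.
Variables (k K : fieldType) (p m M : nat) (alpha : nat -> k)
  (iota : {rmorphism k -> K}) (D : nat -> nat -> K -> K).
Hypothesis hk : perfect_pchar k p.
Hypothesis hm : (0 < m)%N.
Hypothesis hD : is_Fm_field iota p m M alpha D.

Let G : P4 K := \sum_(0 <= n < M.+1) cst4 (iota (alpha n)) * Hn K p n.
Let FF := F1 iota p M alpha.

Lemma hpK : p \in [pchar K].
Proof. exact: (rmorph_pchar iota hk.1). Qed.
Lemma p_gt1 : (1 < p)%N.
Proof. exact: prime_gt1 (pcharf_prime hpK). Qed.
Lemma N_gt0 : (0 < p ^ m)%N.
Proof. by rewrite expn_gt0 ltnW // p_gt1. Qed.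

Lemma D0 a b : (a < p ^ m)%N -> (b < p ^ m)%N -> D a b 0 = 0.
Proof.
move=> ha hb; case: hD => _ [hadd _].
have := hadd 0 0 a b 0 0 ha hb N_gt0 N_gt0.
rewrite coef4D !coef4_Dser // addr0 => E.
by apply: (@addrI _ (D a b 0)); rewrite addr0 -E.
Qed.

Lemma iter_id x b1 b2 c1 c2 : (b1 < p ^ m)%N -> (b2 < p ^ m)%N ->
  (c1 < p ^ m)%N -> (c2 < p ^ m)%N ->
  D c1 c2 (D b1 b2 x) = \sum_(a1 < p ^ m) \sum_(a2 < p ^ m)
     D a1 a2 x * coef4 (FF ^+ a1 * F2 K ^+ a2) b1 b2 c1 c2.
Proof.
move=> h1 h2 h3 h4; case: hD => _ [_ [_ [_ [_ hit]]]].
have := hit x b1 b2 c1 c2 h1 h2 h3 h4.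
rewrite (coef4_sum4 (fun i1 i2 j1 j2 => D j1 j2 (D i1 i2 x))) // => ->.
rewrite coef4_sum; apply: eq_bigr => a1 _; rewrite coef4_sum; apply: eq_bigr => a2 _.
by rewrite -mulrA coef4_cstM.
Qed.

Lemma FF_sub : FF - (v1 K + w1 K) = G.
Proof. by rewrite /FF /F1 /G addrC addKr. Qed.

Lemma cA0 b1 c1 a1 a2 : coef4 (FF ^+ a1 * F2 K ^+ a2) b1 0 c1 0 =
  if (a2 == 0)%N && (a1 == b1 + c1)%N then ('C(a1, c1))%:R else 0.
Proof.
rewrite (@LW_coef_eq K 0 1 0 1 _ ((v1 K + w1 K) ^+ a1 * 0 ^+ a2) 1 b1 0 c1 0);
  last by rewrite !mul0n muln0 !addn0.
  case: a2 => [|a2]; first by rewrite !expr0 !mulr1 binom1 eq_sym.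
  by rewrite expr0n /= mulr0 coef40.
apply: LW_congr_mul; apply: LW_congr_exp.
  rewrite FF_sub; apply: (LW_le _ (LW_G _ _ _)) => //.
rewrite subr0 /F2; apply: LW_add; [exact: LW_v2 | exact: LW_w2].
Qed.

Lemma cA1 i j a1 a2 : coef4 (FF ^+ a1 * F2 K ^+ a2) i 0 0 j =
  if (a1 == i)%N && (a2 == j)%N then 1 else 0.
Proof.
rewrite (@LW_coef_eq K 0 1 0 0 _ ((v1 K + w1 K) ^+ a1 * w2 K ^+ a2) 1 i 0 0 j);
  last by rewrite !mul0n !muln0 !addn0.
  rewrite (@LW_coef_eq K 0 0 1 0 _ (v1 K ^+ a1 * w2 K ^+ a2) 1 i 0 0 j);
    last by rewrite !mul0n !muln0 !addn0.
    have -> : v1 K ^+ a1 * w2 K ^+ a2 = v1 K ^+ a1 * v2 K ^+ 0 * w1 K ^+ 0 * w2 K ^+ a2.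
      by rewrite !expr0 !mulr1.
    by rewrite coef4_mono !eqxx /=.
  apply: LW_congr_mul; apply: LW_congr_exp.
    by rewrite addrC addKr; apply: LW_w1.
  by rewrite subrr; apply: LWz.
apply: LW_congr_mul; apply: LW_congr_exp.
  by rewrite FF_sub; apply: LW_G.
by rewrite /F2 addrK; apply: LW_v2.
Qed.

Lemma cB0 b c a2 : coef4 (FF ^+ 0 * F2 K ^+ a2) 0 b 0 c =
  if (b + c == a2)%N then ('C(a2, c))%:R else 0.
Proof. by rewrite expr0 mul1r binom2. Qed.

Lemma cBw b c a1 a2 : (b + c < a1 + a2)%N -> coef4 (FF ^+ a1 * F2 K ^+ a2) 0 b 0 c = 0.
Proof.
move=> h.
have H : LW 1 1 1 1 (FF ^+ a1 * F2 K ^+ a2) (a1 * 1 + a2 * 1).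
  apply: LW_mul; apply: LW_exp.
    rewrite /FF /F1; apply: LW_add; first (apply: LW_add; [exact: LW_v1 | exact: LW_w1]).
    exact: (LW_le _ (LW_G _ _ _)).
  apply: LW_add; [exact: LW_v2 | exact: LW_w2].
by apply: H; rewrite !muln1 !mul1n add0n addn0.
Qed.

Lemma caseA0 n i x : (n <= m - 1)%N -> (0 < i)%N -> (i < p ^ n.+1)%N -> Fs p n D x ->
  D i 0 x = 0.
Proof.
move=> hn hi0 hi hx.
have p1 := p_gt1.
have pn : (p ^ n.+1 <= p ^ m)%N by rewrite leq_exp2l //; lia.
have hiN : (i < p ^ m)%N := leq_trans hi pn.
set v := logn p i.
have le : (p ^ v <= i)%N by apply: dvdn_leq => //; apply: pfactor_dvdnn.
have vn : (v <= n)%N.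
  by rewrite -ltnS -(ltn_exp2l _ _ p1); apply: leq_ltn_trans le hi.
case: (eqVneq i (p ^ v)%N) => [ei | ne]; first by rewrite ei; exact: (hx v vn).1.
have lt : (p ^ v < i)%N by rewrite ltn_neqAle eq_sym ne le.
set c1 := (i - p ^ v)%N.
have E : (p ^ v + c1 = i)%N by rewrite /c1 subnKC.
have hvN : (p ^ v < p ^ m)%N := ltn_trans lt hiN.
have hcN : (c1 < p ^ m)%N by rewrite /c1; apply: leq_ltn_trans (leq_subr _ _) hiN.
have := @iter_id x (p ^ v)%N 0 c1 0 hvN N_gt0 hcN N_gt0.
rewrite (hx v vn).1 D0 ?N_gt0 //.
under eq_bigr => a1 _ do under eq_bigr => a2 _ do rewrite cA0 E.
rewrite (sum_pick hiN) /=; last first.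
  move=> a1 ha1; apply: big1 => a2 _.
  by rewrite (negbTE ha1) andbF mulr0.
rewrite (sum_pick N_gt0) /=; last first.
  by move=> a2 ha2; rewrite (negbTE ha2) /= mulr0.
rewrite !eqxx /= => /esym /eqP; rewrite mulf_eq0 => /orP[/eqP // |].
by rewrite /c1 bin_sub // (negbTE (binq_nz hpK hi0)).
Qed.

Lemma caseA n i j x : (n <= m - 1)%N -> (0 < i)%N -> (i < p ^ n.+1)%N ->
  (j < p ^ n.+1)%N -> Fs p n D x -> D i j x = 0.
Proof.
move=> hn hi0 hi hj hx.
have p1 := p_gt1.
have pn : (p ^ n.+1 <= p ^ m)%N by rewrite leq_exp2l //; lia.
have hiN : (i < p ^ m)%N := leq_trans hi pn.
have hjN : (j < p ^ m)%N := leq_trans hj pn.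
have := @iter_id x i 0 0 j hiN N_gt0 N_gt0 hjN.
rewrite (caseA0 hn hi0 hi hx) D0 ?N_gt0 //.
under eq_bigr => a1 _ do under eq_bigr => a2 _ do rewrite cA1.
rewrite (sum_pick hiN) /=; last first.
  move=> a1 ha1; apply: big1 => a2 _.
  by rewrite (negbTE ha1) /= mulr0.
rewrite (sum_pick hjN) /=; last first.
  by move=> a2 ha2; rewrite (negbTE ha2) andbF mulr0.
by rewrite !eqxx /= mulr1.
Qed.

Lemma caseB n j x : (n <= m - 1)%N -> (0 < j)%N -> (j < p ^ n.+1)%N -> Fs p n D x ->
  D 0 j x = 0.
Proof.
move=> hn hj0 hj hx.
have p1 := p_gt1.
have pn : (p ^ n.+1 <= p ^ m)%N by rewrite leq_exp2l //; lia.
have hjN : (j < p ^ m)%N := leq_trans hj pn.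
set v := logn p j.
have le : (p ^ v <= j)%N by apply: dvdn_leq => //; apply: pfactor_dvdnn.
have vn : (v <= n)%N.
  by rewrite -ltnS -(ltn_exp2l _ _ p1); apply: leq_ltn_trans le hj.
case: (eqVneq j (p ^ v)%N) => [ej | ne]; first by rewrite ej; exact: (hx v vn).2.
have lt : (p ^ v < j)%N by rewrite ltn_neqAle eq_sym ne le.
set c2 := (j - p ^ v)%N.
have E : (p ^ v + c2 = j)%N by rewrite /c2 subnKC.
have hvN : (p ^ v < p ^ m)%N := ltn_trans lt hjN.
have hcN : (c2 < p ^ m)%N by rewrite /c2; apply: leq_ltn_trans (leq_subr _ _) hjN.
have := @iter_id x 0 (p ^ v)%N 0 c2 N_gt0 hvN N_gt0 hcN.
rewrite (hx v vn).2 D0 ?N_gt0 //.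
rewrite (sum_pick N_gt0) /=; last first.
  move=> [a1 ha1N] /= ha1; apply: big1 => [[a2 ha2N]] _ /=.
  case: (leqP (a1 + a2) j) => hs.
    rewrite (@caseA n a1 a2 x hn) ?mul0r //; try lia.
  by rewrite cBw ?mulr0 // E.
under eq_bigr => a2 _ do rewrite cB0 E.
rewrite (sum_pick hjN) /=; last first.
  by move=> a2 ha2; rewrite eq_sym (negbTE ha2) mulr0.
rewrite !eqxx /= => /esym /eqP; rewrite mulf_eq0 => /orP[/eqP // |].
by rewrite /c2 bin_sub // (negbTE (binq_nz hpK hj0)).
Qed.
End Main.

Theorem lemma4p4 (k K : fieldType) (p m M : nat) (alpha : nat -> k)
  (iota : {rmorphism k -> K}) (D : nat -> nat -> K -> K)
  (hk : perfect_pchar k p) (hm : (0 < m)%N)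
  (hD : is_Fm_field iota p m M alpha D)
  (n i j : nat) (hn : (n <= m - 1)%N)
  (hi : (i < p ^ n.+1)%N) (hj : (j < p ^ n.+1)%N) (hij : (i, j) != (0%N, 0%N))
  (x : K) (hx : Fs p n D x) :
  D i j x = 0.
Proof.
case: i hi hij => [|i] hi hij.
  case: j hj hij => [|j] hj hij; first by rewrite eqxx in hij.
  exact: (caseB hk hm hD hn _ hj hx).
exact: (caseA hk hm hD hn _ hi hj hx).
Qed.
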